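(* The map $\operatorname{sDet}$ defines a strict monoidal functor $\mathcal{C}\to\mathcal{D}$ which is an equivalence of monoidal categories.
   Context: For $i\in\mathbb{N}$ let $V_i\cong\mathbb{C}^2$ with orthonormal basis $v_{i,0},v_{i,1}$; for a finite ordered index list $A$ put $V_A=\bigotimes_{i\in A}V_i$ ($V_\emptyset=\mathbb{C}$). For $I\subseteq A$ let $|I\rangle=\bigotimes_{i\in A}v_{i,\chi(i,I)}$, $\langle I|=\bigotimes_{i\in A}v^*_{i,\chi(i,I)}$, with $\chi(i,I)=1$ if $i\in I$ and $0$ otherwise. For a complex matrix $X$ with rows labeled by $R$ and columns by $S$, $\operatorname{sDet}(X)=\sum_{I\subseteq R,\,J\subseteq S}\det(X_{I,J})|I\rangle\langle J|$ ($X_{I,J}$ the submatrix on rows $I$, columns $J$; $\det$ of the $0\times 0$ matrix is $1$, of non-square matrices $0$); on objects $\operatorname{sDet}(A)=V_A$. $\mathcal{C}$: objects finite ordered subsets of $\mathbb{N}$ (possibly with repetitions), monoidal product union, unit $\emptyset$; morphisms complex matrices with rows and columns labeled by the two objects; composition is matrix product along the common label set; monoidal product of morphisms is direct sum of labeled matrices; associator and unitors are identities. $\mathcal{D}$: the monoidal subcategory of $\mathrm{Vect}_\mathbb{C}$ with objects $V_A$ and morphisms generated by all $\operatorname{sDet}(X)$ under composition (contraction along shared labels) and tensor product. *)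

(* Defs.v *)
From HB Require Import structures.
From mathcomp Require Import all_boot all_order all_algebra.
From mathcomp Require Import complex reals.
Set Implicit Arguments. Unset Strict Implicit. Unset Printing Implicit Defensive.
Import Order.TTheory GRing.Theory Num.Theory.
Local Open Scope ring_scope.

(* Objects of C (and labels of the objects V_A of D) are lists A : seq nat
   (finite ordered families of labels, repetitions allowed).  The tensor
   factors / matrix labels of A are its positions 'I_(size A), ordered as in A.
   The monoidal product of objects is concatenation A ++ B, the unit is [::].

   The basis vector |I> of V_A is indexed by a subset I : {set 'I_(size A)}.
   A linear map f : V_A -> V_B is represented by its matrix in these bases,
   f I J = <I| f |J>  (I subset of positions of B, J subset of positions of A). *)

Section Defs.
Variable R : realType.
Local Notation C := (R[i]).

Definition CHom (A B : seq nat) := 'M[C]_(size B, size A).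

Definition Cid (A : seq nat) : CHom A A := 1%:M.
Definition Ccomp (A B D : seq nat) (Y : CHom B D) (X : CHom A B) : CHom A D :=
  Y *m X.
Definition Ctens (A B A' B' : seq nat) (X : CHom A B) (Y : CHom A' B') :
  CHom (A ++ A') (B ++ B') :=
  castmx (esym (size_cat B B'), esym (size_cat A A')) (block_mx X 0 0 Y).

Definition DHom (A B : seq nat) :=
  {set 'I_(size B)} -> {set 'I_(size A)} -> C.

Definition Did (A : seq nat) : DHom A A := fun I J => (I == J)%:R.
Definition Dcomp (A B D : seq nat) (g : DHom B D) (f : DHom A B) : DHom A D :=
  fun I K => \sum_(J : {set 'I_(size B)}) g I J * f J K.

Definition catl (A A' : seq nat) (i : 'I_(size A)) : 'I_(size (A ++ A')) :=
  cast_ord (esym (size_cat A A')) (lshift (size A') i).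
Definition catr (A A' : seq nat) (i : 'I_(size A')) : 'I_(size (A ++ A')) :=
  cast_ord (esym (size_cat A A')) (rshift (size A) i).
Definition splitl (A A' : seq nat) (I : {set 'I_(size (A ++ A'))}) :
  {set 'I_(size A)} := [set i | catl A' i \in I].
Definition splitr (A A' : seq nat) (I : {set 'I_(size (A ++ A'))}) :
  {set 'I_(size A')} := [set i | catr A i \in I].

(* tensor product: V_(A++A') = V_A (x) V_A', |I> = |splitl I> (x) |splitr I> *)
Definition Dtens (A B A' B' : seq nat) (f : DHom A B) (g : DHom A' B') :
  DHom (A ++ A') (B ++ B') :=
  fun I J => f (splitl I) (splitl J) * g (splitr I) (splitr J).

(* det(X_{I,J}): rows I and columns J taken in increasing (label) order;
   0 if the submatrix is not square; the 0x0 determinant is 1. *)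
Definition minor (m n : nat) (X : 'M[C]_(m, n))
    (I : {set 'I_m}) (J : {set 'I_n}) : C :=
  match #|J| =P #|I| with
  | ReflectT e =>
      \det (\matrix_(i < #|I|, j < #|I|)
              X (enum_val i) (enum_val (cast_ord (esym e) j)))
  | ReflectF _ => 0
  end.

Definition sDet (A B : seq nat) (X : CHom A B) : DHom A B :=
  fun I J => minor X I J.

Inductive inD : forall A B : seq nat, DHom A B -> Prop :=
  | inD_sDet A B (X : CHom A B) : inD (sDet X)
  | inD_comp A B D (g : DHom B D) (f : DHom A B) :
      inD g -> inD f -> inD (Dcomp g f)
  | inD_tens A B A' B' (f : DHom A B) (g : DHom A' B') :
      inD f -> inD g -> inD (Dtens f g).

End Defs.

(* Main.v *)
Require Import Defs.
From HB Require Import structures.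
From mathcomp Require Import all_boot all_order all_algebra.
From mathcomp Require Import complex reals.
From mathcomp Require Import fingroup perm.
From Stdlib Require Import FunctionalExtensionality.
Set Implicit Arguments. Unset Strict Implicit. Unset Printing Implicit Defensive.
Import Order.TTheory GRing.Theory Num.Theory.
Local Open Scope ring_scope.

Section Gen.
Variable R : realType.
Local Notation C := (R[i]).

Lemma det_castmx m k (e : m = k) (M : 'M[C]_m) : \det (castmx (e,e) M) = \det M.
Proof. by case: k / e; rewrite castmx_id. Qed.

Definition subm m n (X : 'M[C]_(m,n)) (I : {set 'I_m}) (J : {set 'I_n}) k
  (eI : k = #|I|) (eJ : k = #|J|) : 'M[C]_k :=
  \matrix_(i, j) X (enum_val (cast_ord eI i)) (enum_val (cast_ord eJ j)).

Lemma minorE m n (X : 'M[C]_(m,n)) (I : {set 'I_m}) (J : {set 'I_n}) k (eI : k = #|I|) (eJ : k = #|J|) :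
  minor X I J = \det (subm X eI eJ).
Proof.
rewrite /minor; case: eqP => [e|ne]; last by exfalso; apply: ne; rewrite -eI -eJ.
rewrite -[RHS](det_castmx eI); congr (\det _); apply/matrixP => i j.
rewrite castmxE !mxE.
have -> : cast_ord eI (cast_ord (esym (eI, eI).1) i) = i by apply: val_inj.
have -> : cast_ord eJ (cast_ord (esym (eI, eI).2) j) = cast_ord (esym e) j
  by apply: val_inj.
by [].
Qed.

Lemma minor0 m n (X : 'M[C]_(m,n)) (I : {set 'I_m}) (J : {set 'I_n}) : #|J| <> #|I| -> minor X I J = 0.
Proof. by rewrite /minor; case: eqP. Qed.

Lemma det_pigeon k (M : 'M[C]_k) (P Q : {set 'I_k}) : (#|Q| < #|P|)%N ->
  (forall i j, i \in P -> j \notin Q -> M i j = 0) -> \det M = 0.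
Proof.
move=> lt H; apply: big1 => s _.
have [i /andP [iP siQ] | none] := pickP [pred i | (i \in P) && (s i \notin Q)].
  rewrite (bigD1 i) //; rewrite (H i (s i) iP siQ).
  by rewrite /= mul0r mulr0.
have sub : [set s x | x in P] \subset Q.
  apply/subsetP => y /imsetP [x xP ->]; move: (none x) => /=.
  by rewrite xP /= => /negbFE.
move: (subset_leq_card sub); rewrite card_imset; last exact: perm_inj.
by rewrite leqNgt lt.
Qed.

End Gen.

Section CB.
Variable R : realType.
Local Notation C := (R[i]).

Lemma CB_step1 k n (A : 'M[C]_(k,n)) (B : 'M[C]_(n,k)) :
  \det (A *m B) = \sum_(f : {ffun 'I_k -> 'I_n})
     \prod_i A i (f i) * \det (\matrix_(i,j) B (f i) j).
Proof.
transitivity (\sum_(s : 'S_k) (-1) ^+ s * \sum_(f : {ffun 'I_k -> 'I_n})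
                 \prod_i (A i (f i) * B (f i) (s i))).
  apply: eq_bigr => s _; congr (_ * _); rewrite -(bigA_distr_bigA (fun i j => A i j * B j (s i))).
  by apply: eq_bigr => i _; rewrite mxE.
transitivity (\sum_(f : {ffun 'I_k -> 'I_n}) \sum_(s : 'S_k)
                 (-1) ^+ s * \prod_i (A i (f i) * B (f i) (s i))).
  under eq_bigr do rewrite big_distrr.
  by rewrite exchange_big.
apply: eq_bigr => f _; rewrite big_distrr; apply: eq_bigr => s _.
rewrite big_split mulrCA; congr (_ * (_ * _)).
by apply: eq_bigr => i _; rewrite mxE.
Qed.


Definition CBterm k n (A : 'M[C]_(k,n)) (B : 'M[C]_(n,k)) (J : {set 'I_n}) : C :=
  match k =P #|J| with
  | ReflectT e => \det (\matrix_(i,j) A i (enum_val (cast_ord e j))) *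
                  \det (\matrix_(i,j) B (enum_val (cast_ord e i)) j)
  | ReflectF _ => 0 end.

Lemma CBtermE k n (A : 'M[C]_(k,n)) (B : 'M[C]_(n,k)) (J : {set 'I_n})
  (e : k = #|J|) : CBterm A B J =
  \det (\matrix_(i,j) A i (enum_val (cast_ord e j))) *
  \det (\matrix_(i,j) B (enum_val (cast_ord e i)) j).
Proof. by rewrite /CBterm; case: eqP => // e'; rewrite (eq_irrelevance e e'). Qed.

Lemma CBtermN k n (A : 'M[C]_(k,n)) (B : 'M[C]_(n,k)) (J : {set 'I_n}) :
  k <> #|J| -> CBterm A B J = 0.
Proof. by rewrite /CBterm; case: eqP. Qed.

Lemma CB_step2 k n (A : 'M[C]_(k,n)) (B : 'M[C]_(n,k)) :
  \det (A *m B) = \sum_(J : {set 'I_n}) \sum_(f : {ffun 'I_k -> 'I_n} |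
     injectiveb f && ([set f x | x in [set: 'I_k]] == J))
     \prod_i A i (f i) * \det (\matrix_(i,j) B (f i) j).
Proof.
rewrite CB_step1 (bigID (fun f : {ffun 'I_k -> 'I_n} => injectiveb f)). rewrite /=.
rewrite [X in _ + X]big1 ?addr0 => [| f nf]; last first.
  case/injectivePn: nf => i1 [i2 Di12 Ef12].
  by rewrite (determinant_alternate Di12) ?mulr0 // => j; rewrite !mxE Ef12.
by rewrite (partition_big (fun f : {ffun 'I_k -> 'I_n} => [set f x | x in [set: 'I_k]]) predT).
Qed.


Lemma CB_inner k n (A : 'M[C]_(k,n)) (B : 'M[C]_(n,k)) (J : {set 'I_n}) :
  \sum_(f : {ffun 'I_k -> 'I_n} |
     injectiveb f && ([set f x | x in [set: 'I_k]] == J))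
     \prod_i A i (f i) * \det (\matrix_(i,j) B (f i) j) = CBterm A B J.
Proof.
case: (eqVneq k #|J|) => [e|ne]; last first.
  rewrite CBtermN; last by move=> e; rewrite e eqxx in ne.
  apply: big1 => f /andP [/injectiveP inj /eqP imJ].
  by move: ne; rewrite -imJ card_imset // cardsT card_ord eqxx.
rewrite (CBtermE A B e).
pose ev (j : 'I_k) : 'I_n := enum_val (cast_ord e j).
have evinj : injective ev.
  by move=> j1 j2 /enum_val_inj /cast_ord_inj.
pose h (t : 'S_k) : {ffun 'I_k -> 'I_n} := [ffun i => ev (t i)].
have hinj : injective h.
  move=> t1 t2 eq; apply/permP => i; apply: evinj.
  by have := congr1 (fun f : {ffun _ -> _} => f i) eq; rewrite /h !ffunE.
have Ph : forall t, injectiveb (h t) && ([set h t x | x in [set: 'I_k]] == J).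
  move=> t; have hi : injective (h t).
    by move=> x y; rewrite /h !ffunE => /evinj /perm_inj.
  apply/andP; split; first exact/injectiveP.
  rewrite eqEcard card_imset // cardsT card_ord -e leqnn andbT.
  by apply/subsetP => y /imsetP [x _ ->]; rewrite /h ffunE enum_valP.
have hsurj : forall f : {ffun 'I_k -> 'I_n},
    injectiveb f && ([set f x | x in [set: 'I_k]] == J) -> exists t, h t = f.
  move=> f /andP [/injectiveP finj /eqP imJ].
  have fJ : forall i, f i \in J by move=> i; rewrite -imJ imset_f ?inE.
  pose t0 (i : 'I_k) : 'I_k := cast_ord (esym e) (enum_rank_in (fJ i) (f i)).
  have t0inj : injective t0.
    move=> i1 i2 /cast_ord_inj eq; apply: finj.
    by rewrite -(enum_rankK_in (fJ i1) (fJ i1)) eq (enum_rankK_in (fJ i2) (fJ i2)).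
  exists (perm t0inj); apply/ffunP => i.
  by rewrite /h ffunE permE /t0 /ev cast_ordKV enum_rankK_in.
pose g (f : {ffun 'I_k -> 'I_n}) : 'S_k := odflt 1%g [pick t | h t == f].
rewrite (reindex h); last first.
  exists g => [t _ | f Pf].
  - rewrite /g; case: pickP => [t' /eqP /hinj -> // | none].
    by have := none t; rewrite eqxx.
  - rewrite /g; case: pickP => [t' /eqP // | none].
    by case: (hsurj f Pf) => t ht; have := none t; rewrite ht eqxx.
rewrite (eq_bigl predT) => [| t]; last by rewrite Ph.
set As := \matrix_(i, j) A i (enum_val (cast_ord e j)).
set Bs := \matrix_(i, j) B (enum_val (cast_ord e i)) j.
rewrite [RHS]big_distrl /=; apply: eq_bigr => t _.
have -> : \matrix_(i, j) B (h t i) j = row_perm t Bs.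
  by apply/matrixP => i j; rewrite !mxE /h ffunE.
rewrite row_permE det_mulmx det_perm mulrCA mulrA; congr (_ * _ * _).
by apply: eq_bigr => i _; rewrite /h ffunE mxE.
Qed.

Lemma CB k n (A : 'M[C]_(k,n)) (B : 'M[C]_(n,k)) :
  \det (A *m B) = \sum_(J : {set 'I_n}) CBterm A B J.
Proof. by rewrite CB_step2; apply: eq_bigr => J _; rewrite CB_inner. Qed.

End CB.

Section Comp.
Variable R : realType.
Local Notation C := (R[i]).

Lemma minor_mul d b a (Y : 'M[C]_(d,b)) (X : 'M[C]_(b,a))
  (I : {set 'I_d}) (K : {set 'I_a}) :
  minor (Y *m X) I K = \sum_(J : {set 'I_b}) minor Y I J * minor X J K.
Proof.
case: (eqVneq #|K| #|I|) => [eK | ne]; last first.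
  rewrite minor0; last exact/eqP.
  symmetry; apply: big1 => J _; case: (eqVneq #|J| #|I|) => [eJ|nJ].
    by rewrite (minor0 X) ?mulr0 // eJ; apply/eqP.
  by rewrite minor0 ?mul0r //; apply/eqP.
rewrite (minorE (Y *m X) (erefl #|I|) (esym eK)).
set Ys := \matrix_(i < #|I|, l < b) Y (enum_val (cast_ord (erefl #|I|) i)) l.
set Xs := \matrix_(l < b, j < #|I|) X l (enum_val (cast_ord (esym eK) j)).
have -> : subm (Y *m X) (erefl #|I|) (esym eK) = Ys *m Xs.
  by apply/matrixP => i j; rewrite !mxE; apply: eq_bigr => l _; rewrite !mxE.
rewrite CB; apply: eq_bigr => J _.
case: (eqVneq #|I| #|J|) => [eJ | nJ].
  rewrite (CBtermE _ _ eJ) (minorE Y (erefl _) eJ) (minorE X eJ (esym eK)).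
  by congr (_ * _); congr (determinant _); apply/matrixP => i j; rewrite !mxE.
have nJ' : #|I| <> #|J| by move/eqP; rewrite (negPf nJ).
rewrite CBtermN // minor0 ?mul0r //.
by move=> e; apply: nJ'.
Qed.

Lemma minor1 n (I J : {set 'I_n}) : minor (1%:M : 'M[C]_n) I J = (I == J)%:R.
Proof.
case: (eqVneq I J) => [<- | ne].
  rewrite (minorE _ (erefl #|I|) (erefl #|I|)).
  have -> : subm (1%:M : 'M[C]_n) (erefl #|I|) (erefl #|I|) = 1%:M.
    by apply/matrixP => i j; rewrite !mxE !cast_ord_id (inj_eq enum_val_inj).
  by rewrite det1.
case: (eqVneq #|J| #|I|) => [eJ | nJ]; last by rewrite minor0 //; apply/eqP.
have [x xI xJ] : exists2 x, x \in I & x \notin J.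
  apply/subsetPn; apply: contra ne => sub.
  by rewrite eqEcard sub eJ leqnn.
rewrite (minorE _ (erefl #|I|) (esym eJ)).
apply: (det_pigeon (P := [set enum_rank_in xI x]) (Q := set0)).
  by rewrite cards0 cards1.
move=> i j /set1P -> _; rewrite !mxE cast_ord_id (enum_rankK_in xI xI).
case: eqP => // ex; move: (enum_valP (cast_ord (esym eJ) j)).
by rewrite -ex (negPf xJ).
Qed.

Lemma enum_val_set1 (T : finType) (a : T) (x : 'I_#|[set a]|) : enum_val x = a.
Proof. by apply/set1P; apply: enum_valP. Qed.

Lemma minor11 m n (X : 'M[C]_(m,n)) i j : minor X [set i] [set j] = X i j.
Proof.
rewrite (minorE X (esym (cards1 i)) (esym (cards1 j))) det_mx11 mxE.
by rewrite !enum_val_set1.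
Qed.

End Comp.

Section Split.
Variables m1 m2 M : nat.
Variable eM : M = (m1 + m2)%N.

Definition gl (i : 'I_m1) : 'I_M := cast_ord (esym eM) (lshift m2 i).
Definition gr (i : 'I_m2) : 'I_M := cast_ord (esym eM) (rshift m1 i).
Definition sl (I : {set 'I_M}) : {set 'I_m1} := [set i | gl i \in I].
Definition sr (I : {set 'I_M}) : {set 'I_m2} := [set i | gr i \in I].

Lemma val_gl i : val (gl i) = val i. Proof. by []. Qed.
Lemma val_gr i : val (gr i) = (m1 + val i)%N. Proof. by []. Qed.

Lemma gl_inj : injective gl.
Proof. by move=> a b e; apply: val_inj; rewrite -val_gl e. Qed.
Lemma gr_inj : injective gr.
Proof. by move=> a b e; apply: val_inj; move: (congr1 val e); rewrite !val_gr => /addnI. Qed.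

Definition ltv n : rel 'I_n := fun x y => (val x < val y)%N.

Lemma sorted_enum_ord n (A : {set 'I_n}) : sorted (@ltv n) (enum A).
Proof.
have inc_A : sorted ltn (map val (enum A)).
  rewrite -[enum _](eq_filter (mem_enum _)).
  rewrite -(eq_filter (mem_map val_inj _)) -filter_map.
  by rewrite (sorted_filter ltn_trans) // unlock val_ord_enum iota_ltn_sorted.
by rewrite sorted_map in inc_A.
Qed.

Lemma gl_gr a b : gl a != gr b.
Proof.
apply/negP => /eqP /(congr1 val); rewrite val_gl val_gr => e.
by move: (ltn_ord a); rewrite e ltnNge leq_addr.
Qed.

Lemma enum_split (I : {set 'I_M}) :
  enum I = map gl (enum (sl I)) ++ map gr (enum (sr I)).
Proof.
have ltr : transitive (@ltv M) by move=> ? ? ?; apply: ltn_trans.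
apply: (irr_sorted_eq ltr); first by move=> x; apply: ltnn.
- exact: sorted_enum_ord.
- rewrite sorted_pairwise // pairwise_cat -!sorted_pairwise //.
  apply/and3P; split.
  + apply/allrelP => x y /mapP [a _ ->] /mapP [b _ ->].
    by rewrite /ltv val_gl val_gr; apply: leq_trans (ltn_ord a) (leq_addr _ _).
  + by rewrite sorted_map; apply: sorted_enum_ord.
  + rewrite sorted_map (@eq_sorted _ _ (@ltv m2)); first exact: sorted_enum_ord.
    by move=> x y; rewrite /relpre /ltv /= ltn_add2l.
move=> x; rewrite mem_enum mem_cat.
case: (splitP (cast_ord eM x)) => [a ea | b eb].
  have -> : x = gl a by apply: val_inj; exact: ea.
  rewrite (mem_map gl_inj) mem_enum inE.
  have -> : (gl a \in map gr (enum (sr I))) = false.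
    by apply/negbTE/mapP => -[b _ eb]; move: (gl_gr a b); rewrite eb eqxx.
  by rewrite orbF.
have -> : x = gr b by apply: val_inj; exact: eb.
rewrite (mem_map gr_inj) mem_enum inE.
have -> : (gr b \in map gl (enum (sl I))) = false.
  by apply/negbTE/mapP => -[a _ ea]; move: (gl_gr a b); rewrite ea eqxx.
by [].
Qed.

Lemma card_split (I : {set 'I_M}) : #|I| = (#|sl I| + #|sr I|)%N.
Proof. by rewrite !cardE enum_split size_cat !size_map. Qed.


Lemma evL (I : {set 'I_M}) (x : 'I_#|I|) (j : 'I_#|sl I|) :
  val x = val j -> enum_val x = gl (enum_val j).
Proof.
move=> e; rewrite [enum_val x]/enum_val enum_split nth_cat size_map e -cardE ltn_ord.
rewrite (nth_map (enum_val j)); last by rewrite -cardE ltn_ord.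
f_equal; apply: set_nth_default; by rewrite -cardE ltn_ord.
Qed.

Lemma evR (I : {set 'I_M}) (x : 'I_#|I|) (j : 'I_#|sr I|) :
  val x = (#|sl I| + val j)%N -> enum_val x = gr (enum_val j).
Proof.
move=> e; rewrite [enum_val x]/enum_val enum_split nth_cat size_map e -cardE.
rewrite ltnNge leq_addr /= addKn.
rewrite (nth_map (enum_val j)); last by rewrite -cardE ltn_ord.
f_equal; apply: set_nth_default; by rewrite -cardE ltn_ord.
Qed.

End Split.

Section Block.
Variable R : realType.
Local Notation C := (R[i]).
Variables m1 m2 n1 n2 M N : nat.
Variables (eM : M = (m1 + m2)%N) (eN : N = (n1 + n2)%N).
Variables (X : 'M[C]_(m1, n1)) (Y : 'M[C]_(m2, n2)).
Let Z : 'M[C]_(M, N) := castmx (esym eM, esym eN) (block_mx X 0 0 Y).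

Lemma ZLL a b : Z (gl eM a) (gl eN b) = X a b.
Proof.
rewrite castmxE.
have -> : cast_ord (esym (esym eM)) (gl eM a) = lshift m2 a by apply: val_inj.
have -> : cast_ord (esym (esym eN)) (gl eN b) = lshift n2 b by apply: val_inj.
by rewrite block_mxEul.
Qed.

Lemma ZLR a b : Z (gl eM a) (gr eN b) = 0.
Proof.
rewrite castmxE.
have -> : cast_ord (esym (esym eM)) (gl eM a) = lshift m2 a by apply: val_inj.
have -> : cast_ord (esym (esym eN)) (gr eN b) = rshift n1 b by apply: val_inj.
by rewrite block_mxEur mxE.
Qed.

Lemma ZRL a b : Z (gr eM a) (gl eN b) = 0.
Proof.
rewrite castmxE.
have -> : cast_ord (esym (esym eM)) (gr eM a) = rshift m1 a by apply: val_inj.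
have -> : cast_ord (esym (esym eN)) (gl eN b) = lshift n2 b by apply: val_inj.
by rewrite block_mxEdl mxE.
Qed.

Lemma ZRR a b : Z (gr eM a) (gr eN b) = Y a b.
Proof.
rewrite castmxE.
have -> : cast_ord (esym (esym eM)) (gr eM a) = rshift m1 a by apply: val_inj.
have -> : cast_ord (esym (esym eN)) (gr eN b) = rshift n1 b by apply: val_inj.
by rewrite block_mxEdr.
Qed.


Lemma minor_block (I : {set 'I_M}) (J : {set 'I_N}) :
  minor Z I J = minor X (sl eM I) (sl eN J) * minor Y (sr eM I) (sr eN J).
Proof.
have cI := card_split eM I; have cJ := card_split eN J.
case: (eqVneq #|sl eM I| #|sl eN J|) => [ep | np]; last first.
  rewrite (minor0 X) ?mul0r; last by move=> e; rewrite e eqxx in np.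
  case: (eqVneq #|J| #|I|) => [eJ | nJ]; last by rewrite minor0 //; apply/eqP.
  rewrite (minorE Z (erefl #|I|) (esym eJ)).
  have hp : (#|sl eM I| <= #|I|)%N by rewrite cI leq_addr.
  have hp' : (#|sl eN J| <= #|I|)%N by rewrite -eJ cJ leq_addr.
  have rowL : forall a : 'I_#|sl eM I|,
      enum_val (cast_ord (erefl #|I|) (widen_ord hp a)) = gl eM (enum_val a).
    by move=> a; rewrite cast_ord_id; apply: evL.
  have colL : forall a : 'I_#|sl eN J|,
      enum_val (cast_ord (esym eJ) (widen_ord hp' a)) = gl eN (enum_val a).
    by move=> a; apply: evL.
  have rowR : forall i : 'I_#|I|, (#|sl eM I| <= val i)%N ->
      exists b, enum_val (cast_ord (erefl #|I|) i) = gr eM b.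
    move=> i hi; have hb : (val i - #|sl eM I| < #|sr eM I|)%N.
      by rewrite ltn_subLR // -cI ltn_ord.
    exists (enum_val (Ordinal hb)); rewrite cast_ord_id; apply: evR => /=.
    by rewrite subnKC.
  have colR : forall j : 'I_#|I|, (#|sl eN J| <= val j)%N ->
      exists b, enum_val (cast_ord (esym eJ) j) = gr eN b.
    move=> j hj; have hb : (val j - #|sl eN J| < #|sr eN J|)%N.
      by rewrite ltn_subLR // -cJ eJ ltn_ord.
    exists (enum_val (Ordinal hb)); apply: evR => /=.
    by rewrite subnKC.
  have memW : forall n k (h : (k <= n)%N) (j : 'I_n), (val j < k)%N ->
      j \in [set widen_ord h a | a in [set: 'I_k]].
    move=> n k h j hj; apply/imsetP; exists (Ordinal hj); first by rewrite inE.
    by apply: val_inj.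
  have cardW : forall n k (h : (k <= n)%N),
      #|[set widen_ord h a | a in [set: 'I_k]]| = k.
    move=> n k h; rewrite card_imset ?cardsT ?card_ord //.
    by move=> x y e; apply: val_inj; exact: (congr1 val e).
  case: (ltngtP #|sl eN J| #|sl eM I|) => [lt | lt | e]; last first.
    by rewrite e eqxx in np.
  - rewrite -det_tr.
    apply: (det_pigeon (P := [set widen_ord hp' a | a in [set: 'I_#|sl eN J|]])
                       (Q := [set widen_ord hp a | a in [set: 'I_#|sl eM I|]])).
      by rewrite (cardW _ _ hp) (cardW _ _ hp').
    move=> j i /imsetP [a _ ->] iQ; rewrite !mxE colL.
    have hi : (#|sl eM I| <= val i)%N.
      by rewrite leqNgt; apply: contra iQ; apply: memW.
    by case: (rowR i hi) => b ->; rewrite ZRL.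
  - apply: (det_pigeon (P := [set widen_ord hp a | a in [set: 'I_#|sl eM I|]])
                       (Q := [set widen_ord hp' a | a in [set: 'I_#|sl eN J|]])).
      by rewrite (cardW _ _ hp) (cardW _ _ hp').
    move=> i j /imsetP [a _ ->] jQ; rewrite mxE rowL.
    have hj : (#|sl eN J| <= val j)%N.
      by rewrite leqNgt; apply: contra jQ; apply: memW.
    by case: (colR j hj) => b ->; rewrite ZLR.
case: (eqVneq #|sr eM I| #|sr eN J|) => [eq | nq]; last first.
  rewrite (minor0 Y) ?mulr0; last by move=> e; rewrite e eqxx in nq.
  rewrite minor0 // cI cJ ep => /addnI e.
  by rewrite e eqxx in nq.
have eI : (#|sl eM I| + #|sr eM I|)%N = #|I| by rewrite cI.
have eJ : (#|sl eM I| + #|sr eM I|)%N = #|J| by rewrite cJ ep eq.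
rewrite (minorE Z eI eJ) (minorE X (erefl _) ep) (minorE Y (erefl _) eq).
rewrite -[subm Z eI eJ]submxK.
have -> : dlsubmx (subm Z eI eJ) = 0.
  apply/matrixP => i j; rewrite !mxE.
  rewrite (evR (j := i)) // (evL (j := cast_ord ep j)) //.
  by rewrite ZRL.
rewrite det_ublock; congr (_ * _); congr (determinant _).
  apply/matrixP => i j; rewrite !mxE (evL (j := i)) // (evL (j := cast_ord ep j)) //.
  by rewrite ZLL cast_ord_id.
apply/matrixP => i j; rewrite !mxE (evR (j := i)) // (evR (j := cast_ord eq j)).
  by rewrite ZRR cast_ord_id.
by rewrite /= ep.
Qed.

End Block.


Theorem mainTheorem3 (R : realType) :
  (* preserves identities *)
  (forall A : seq nat, sDet (@Cid R A) = @Did R A) /\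
  (* preserves composition *)
  (forall (A B D : seq nat) (Y : CHom R B D) (X : CHom R A B),
      sDet (Ccomp Y X) = Dcomp (sDet Y) (sDet X)) /\
  (* strict monoidal on morphisms *)
  (forall (A B A' B' : seq nat) (X : CHom R A B) (Y : CHom R A' B'),
      sDet (Ctens X Y) = Dtens (sDet X) (sDet Y)) /\
  (* faithful *)
  (forall (A B : seq nat) (X Y : CHom R A B), sDet X = sDet Y -> X = Y) /\
  (* full: every morphism V_A -> V_B of D is some sDet(X) *)
  (forall (A B : seq nat) (f : DHom R A B), inD f -> exists X : CHom R A B, sDet X = f).
Proof.
have Hcomp : forall (A B D : seq nat) (Y : CHom R B D) (X : CHom R A B),
    sDet (Ccomp Y X) = Dcomp (sDet Y) (sDet X).
  move=> A B D Y X; apply: functional_extensionality => I.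
  apply: functional_extensionality => K.
  by rewrite /sDet /Dcomp /Ccomp minor_mul.
have Htens : forall (A B A' B' : seq nat) (X : CHom R A B) (Y : CHom R A' B'),
    sDet (Ctens X Y) = Dtens (sDet X) (sDet Y).
  move=> A B A' B' X Y; apply: functional_extensionality => I.
  apply: functional_extensionality => J.
  exact: (minor_block (size_cat B B') (size_cat A A') X Y I J).
split.
  move=> A; apply: functional_extensionality => I.
  apply: functional_extensionality => J.
  exact: minor1.
split; first exact: Hcomp.
split; first exact: Htens.
split.
  move=> A B X Y H; apply/matrixP => i j.
  have := congr1 (fun f : DHom R A B => f [set i] [set j]) H.
  by rewrite /sDet !minor11.
move=> A B f; elim => [A0 B0 X | A0 B0 D0 g f0 _ [Xg <-] _ [Xf <-] |
                       A0 B0 A1 B1 f0 g _ [Xf <-] _ [Xg <-]].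
- by exists X.
- by exists (Ccomp Xg Xf); rewrite Hcomp.
- by exists (Ctens Xf Xg); rewrite Htens.
Qed.
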